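(* Let $\mathsf{CG}$ be the connector gadget. Suppose that $H$ is a subgraph of $\mathsf{CG}$ such that in $H$ each of the four terminals $t^{\mathsf{N}},t^{\mathsf{E}},t^{\mathsf{S}},t^{\mathsf{W}}$ is connected to some interface vertex. Then $H$ has at least $6$ edges. Moreover, if $H$ has exactly $6$ edges, then $H$ either consists of all edges incident to $u^{\mathsf{NW}}$ and to $u^{\mathsf{SE}}$, or of all edges incident to $u^{\mathsf{NE}}$ and to $u^{\mathsf{SW}}$.
   Context: The connector gadget $\mathsf{CG}$ is the undirected graph on $12$ vertices: interface vertices $x^{\mathsf{NW}},x^{\mathsf{NE}},x^{\mathsf{SE}},x^{\mathsf{SW}}$, terminals $t^{\mathsf{N}},t^{\mathsf{E}},t^{\mathsf{S}},t^{\mathsf{W}}$, and vertices $u^{\mathsf{NW}},u^{\mathsf{NE}},u^{\mathsf{SE}},u^{\mathsf{SW}}$, with exactly the following $12$ edges: $u^{\mathsf{NW}}$ is adjacent to $x^{\mathsf{NW}},t^{\mathsf{N}},t^{\mathsf{W}}$; $u^{\mathsf{NE}}$ is adjacent to $x^{\mathsf{NE}},t^{\mathsf{N}},t^{\mathsf{E}}$; $u^{\mathsf{SE}}$ is adjacent to $x^{\mathsf{SE}},t^{\mathsf{S}},t^{\mathsf{E}}$; $u^{\mathsf{SW}}$ is adjacent to $x^{\mathsf{SW}},t^{\mathsf{S}},t^{\mathsf{W}}$. *)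

(* Defs.v *)
From HB Require Import structures.
From mathcomp Require Import all_boot.
Set Implicit Arguments. Unset Strict Implicit. Unset Printing Implicit Defensive.

Inductive cg_vertex :=
  | xNW | xNE | xSE | xSW
  | tN | tE | tS | tW
  | uNW | uNE | uSE | uSW.

Definition cgv_to_ord (v : cg_vertex) : 'I_12 :=
  inord (match v with
         | xNW => 0 | xNE => 1 | xSE => 2 | xSW => 3
         | tN => 4 | tE => 5 | tS => 6 | tW => 7
         | uNW => 8 | uNE => 9 | uSE => 10 | uSW => 11 end).
Definition ord_to_cgv (i : 'I_12) : cg_vertex :=
  match val i with
  | 0 => xNW | 1 => xNE | 2 => xSE | 3 => xSW
  | 4 => tN | 5 => tE | 6 => tS | 7 => tW
  | 8 => uNW | 9 => uNE | 10 => uSE | _ => uSW end.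
Lemma cgvK : cancel cgv_to_ord ord_to_cgv.
Proof. by case; rewrite /ord_to_cgv /cgv_to_ord /= ?inordK. Qed.
HB.instance Definition _ := Equality.copy cg_vertex (can_type cgvK).
HB.instance Definition _ := Finite.copy cg_vertex (can_type cgvK).

Inductive cg_edge :=
  | e_uNW_xNW | e_uNW_tN | e_uNW_tW
  | e_uNE_xNE | e_uNE_tN | e_uNE_tE
  | e_uSE_xSE | e_uSE_tS | e_uSE_tE
  | e_uSW_xSW | e_uSW_tS | e_uSW_tW.

Definition cge_to_ord (e : cg_edge) : 'I_12 :=
  inord (match e with
         | e_uNW_xNW => 0 | e_uNW_tN => 1 | e_uNW_tW => 2
         | e_uNE_xNE => 3 | e_uNE_tN => 4 | e_uNE_tE => 5
         | e_uSE_xSE => 6 | e_uSE_tS => 7 | e_uSE_tE => 8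
         | e_uSW_xSW => 9 | e_uSW_tS => 10 | e_uSW_tW => 11 end).
Definition ord_to_cge (i : 'I_12) : cg_edge :=
  match val i with
  | 0 => e_uNW_xNW | 1 => e_uNW_tN | 2 => e_uNW_tW
  | 3 => e_uNE_xNE | 4 => e_uNE_tN | 5 => e_uNE_tE
  | 6 => e_uSE_xSE | 7 => e_uSE_tS | 8 => e_uSE_tE
  | 9 => e_uSW_xSW | 10 => e_uSW_tS | _ => e_uSW_tW end.
Lemma cgeK : cancel cge_to_ord ord_to_cge.
Proof. by case; rewrite /ord_to_cge /cge_to_ord /= ?inordK. Qed.
HB.instance Definition _ := Equality.copy cg_edge (can_type cgeK).
HB.instance Definition _ := Finite.copy cg_edge (can_type cgeK).

Definition cg_ends (e : cg_edge) : cg_vertex * cg_vertex :=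
  match e with
  | e_uNW_xNW => (uNW, xNW) | e_uNW_tN => (uNW, tN) | e_uNW_tW => (uNW, tW)
  | e_uNE_xNE => (uNE, xNE) | e_uNE_tN => (uNE, tN) | e_uNE_tE => (uNE, tE)
  | e_uSE_xSE => (uSE, xSE) | e_uSE_tS => (uSE, tS) | e_uSE_tE => (uSE, tE)
  | e_uSW_xSW => (uSW, xSW) | e_uSW_tS => (uSW, tS) | e_uSW_tW => (uSW, tW)
  end.

Definition interface : pred cg_vertex := [pred v | v \in [:: xNW; xNE; xSE; xSW]].
Definition terminals : seq cg_vertex := [:: tN; tE; tS; tW].

(* A subgraph H of CG is given by its edge set H \subseteq E(CG); adjacency in H. *)
Definition adjH (H : {set cg_edge}) : rel cg_vertex :=
  fun v w => [exists e in H, (cg_ends e == (v, w)) || (cg_ends e == (w, v))].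

Definition connH (H : {set cg_edge}) (v w : cg_vertex) : bool := connect (adjH H) v w.

Definition incident (v : cg_vertex) : {set cg_edge} :=
  [set e | (v == (cg_ends e).1) || (v == (cg_ends e).2)].

(* Main.v *)
Require Import Defs.
From HB Require Import structures.
From mathcomp Require Import all_boot.
From Stdlib Require Import PeanoNat.
Set Implicit Arguments. Unset Strict Implicit.

Definition allv := [:: xNW; xNE; xSE; xSW; tN; tE; tS; tW; uNW; uNE; uSE; uSW].
Definition alle := [:: e_uNW_xNW; e_uNW_tN; e_uNW_tW; e_uNE_xNE; e_uNE_tN; e_uNE_tE;
  e_uSE_xSE; e_uSE_tS; e_uSE_tE; e_uSW_xSW; e_uSW_tS; e_uSW_tW].

Definition vidx (v : cg_vertex) : nat :=
  match v with
  | xNW => 0 | xNE => 1 | xSE => 2 | xSW => 3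
  | tN => 4 | tE => 5 | tS => 6 | tW => 7
  | uNW => 8 | uNE => 9 | uSE => 10 | uSW => 11 end.

Definition veqb (v w : cg_vertex) : bool := Nat.eqb (vidx v) (vidx w).

Definition eadj (e : cg_edge) (v w : cg_vertex) : bool :=
  let (a, b) := cg_ends e in (veqb a v && veqb b w) || (veqb a w && veqb b v).

Definition adjb (f : cg_edge -> bool) (v w : cg_vertex) : bool :=
  has (fun e => f e && eadj e v w) alle.

Definition getS (S : list bool) (v : cg_vertex) : bool := nth false S (vidx v).

Definition stepS f (S : list bool) : list bool :=
  map (fun w => getS S w || has (fun e => f e &&
     let (a, b) := cg_ends e in (veqb a w && getS S b) || (veqb b w && getS S a)) alle) allv.

Definition initS (t : cg_vertex) : list bool := map (fun w => veqb t w) allv.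

Definition reachS f t := Nat.iter 12 (stepS f) (initS t).

Definition closedS f (S : list bool) : bool :=
  all (fun e => negb (f e) || let (a, b) := cg_ends e in getS S a == getS S b) alle.

Definition okS f t (S : list bool) := getS S t && closedS f S.
Definition hitS (S : list bool) :=
  getS S xNW || getS S xNE || getS S xSE || getS S xSW.

Definition pA (e : cg_edge) : bool :=
  match e with
  | e_uNW_xNW | e_uNW_tN | e_uNW_tW | e_uSE_xSE | e_uSE_tS | e_uSE_tE => true
  | _ => false end.
Definition pB (e : cg_edge) : bool := negb (pA e).

Definition cnt f := foldr (fun e n => Nat.add (if f e then 1 else 0) n) 0 alle.

Definition eqpat (f g : cg_edge -> bool) := all (fun e => (f e == g e)) alle.

Definition G f : bool :=
  let SN := reachS f tN in let SE := reachS f tE in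
  let SS := reachS f tS in let SW := reachS f tW in
  okS f tN SN && okS f tE SE && okS f tS SS && okS f tW SW &&
  (negb (hitS SN && hitS SE && hitS SS && hitS SW) ||
   (Nat.leb 6 (cnt f) && (negb (Nat.eqb (cnt f) 6) || eqpat f pA || eqpat f pB))).

Definition mkf (b1 b2 b3 b4 b5 b6 b7 b8 b9 b10 b11 b12 : bool) (e : cg_edge) : bool :=
  match e with
  | e_uNW_xNW => b1 | e_uNW_tN => b2 | e_uNW_tW => b3
  | e_uNE_xNE => b4 | e_uNE_tN => b5 | e_uNE_tE => b6
  | e_uSE_xSE => b7 | e_uSE_tS => b8 | e_uSE_tE => b9
  | e_uSW_xSW => b10 | e_uSW_tS => b11 | e_uSW_tW => b12 end.

Definition fb (P : bool -> bool) := P true && P false.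
Lemma fbP P : fb P -> forall b, P b.
Proof. by case/andP=> ? ? []. Qed.

Definition check :=
  fb (fun b1 => fb (fun b2 => fb (fun b3 => fb (fun b4 => fb (fun b5 => fb (fun b6 =>
  fb (fun b7 => fb (fun b8 => fb (fun b9 => fb (fun b10 => fb (fun b11 => fb (fun b12 =>
  G (mkf b1 b2 b3 b4 b5 b6 b7 b8 b9 b10 b11 b12))))))))))))).

Lemma check_ok : check = true.
Proof. vm_compute. reflexivity. Qed.

Lemma G_all b1 b2 b3 b4 b5 b6 b7 b8 b9 b10 b11 b12 :
  G (mkf b1 b2 b3 b4 b5 b6 b7 b8 b9 b10 b11 b12).
Proof.
have := check_ok; rewrite /check => /fbP H1.
move: (H1 b1) => /fbP H2. move: (H2 b2) => /fbP H3. move: (H3 b3) => /fbP H4.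
move: (H4 b4) => /fbP H5. move: (H5 b5) => /fbP H6. move: (H6 b6) => /fbP H7.
move: (H7 b7) => /fbP H8. move: (H8 b8) => /fbP H9. move: (H9 b9) => /fbP H10.
move: (H10 b10) => /fbP H11. move: (H11 b11) => /fbP H12. exact: H12.
Qed.

Section Main.
Variable H : {set cg_edge}.
Let f := mkf (e_uNW_xNW \in H) (e_uNW_tN \in H) (e_uNW_tW \in H)
  (e_uNE_xNE \in H) (e_uNE_tN \in H) (e_uNE_tE \in H)
  (e_uSE_xSE \in H) (e_uSE_tS \in H) (e_uSE_tE \in H)
  (e_uSW_xSW \in H) (e_uSW_tS \in H) (e_uSW_tW \in H).
Lemma fH e : f e = (e \in H). Proof. by case: e. Qed.
Lemma in_alle e : e \in alle. Proof. by case: e; rewrite !inE eqxx ?orbT. Qed.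

Definition eidx (e : cg_edge) : nat :=
  match e with
  | e_uNW_xNW => 0 | e_uNW_tN => 1 | e_uNW_tW => 2
  | e_uNE_xNE => 3 | e_uNE_tN => 4 | e_uNE_tE => 5
  | e_uSE_xSE => 6 | e_uSE_tS => 7 | e_uSE_tE => 8
  | e_uSW_xSW => 9 | e_uSW_tS => 10 | e_uSW_tW => 11 end.
Lemma eidx_inj : injective eidx. Proof. by case; case. Qed.

Lemma step_closed S v w : closedS f S -> getS S v -> adjH H v w -> getS S w.
Proof.
rewrite /adjH => /allP cl Sv /existsP [e /andP [eH]].
have := cl e (in_alle e); rewrite fH eH /=.
case: (cg_ends e) => a b /eqP Eab /orP [] /eqP [Ea Eb]; subst.
  by rewrite -Eab.
by rewrite Eab.
Qed.

Lemma reach_ok t x : okS f t (reachS f t) -> connH H t x -> getS (reachS f t) x.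
Proof.
move: (reachS f t) => S.
case/andP=> St cl /connectP [p pth ->].
elim: p t St pth => [|w p IH] v Sv //= /andP [a pth].
exact: (IH w (step_closed cl Sv a) pth).
Qed.

Lemma card_cnt : #|H| = cnt f.
Proof.
have P : perm_eq (enum H) (filter (mem H) alle).
  apply: uniq_perm; first exact: enum_uniq.
    apply: filter_uniq; rewrite -(map_inj_uniq eidx_inj); by [].
  by move=> e; rewrite mem_enum mem_filter in_alle andbT.
rewrite cardE (perm_size P) size_filter /cnt /=.
reflexivity.
Qed.

Lemma veqbE (v w : cg_vertex) : (v == w) = veqb v w.
Proof. apply/eqP/idP; [by move=> ->; case: w | by case: v; case: w]. Qed.

Lemma patA : eqpat f pA -> H = incident uNW :|: incident uSE.
Proof.
move/allP=> E; apply/setP=> e; have := E e (in_alle e); rewrite fH => /eqP ->.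
by rewrite !inE !veqbE; case: e.
Qed.

Lemma patB : eqpat f pB -> H = incident uNE :|: incident uSW.
Proof.
move/allP=> E; apply/setP=> e; have := E e (in_alle e); rewrite fH => /eqP ->.
by rewrite !inE !veqbE; case: e.
Qed.

Lemma main : (forall t, t \in terminals -> exists2 x, interface x & connH H t x) ->
  6 <= #|H| /\
  (#|H| = 6 ->
     H = incident uNW :|: incident uSE \/ H = incident uNE :|: incident uSW).
Proof.
move=> hyp.
have := G_all (e_uNW_xNW \in H) (e_uNW_tN \in H) (e_uNW_tW \in H)
  (e_uNE_xNE \in H) (e_uNE_tN \in H) (e_uNE_tE \in H)
  (e_uSE_xSE \in H) (e_uSE_tS \in H) (e_uSE_tE \in H)
  (e_uSW_xSW \in H) (e_uSW_tS \in H) (e_uSW_tW \in H).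
rewrite -/f /G.
have hit t : t \in terminals -> okS f t (reachS f t) -> hitS (reachS f t).
  move=> tT ok; have [x ix cx] := hyp t tT.
  have := reach_ok ok cx; clear cx.
  move: ix; rewrite /interface /= !inE !veqbE /hitS.
  move: (reachS f t) => S.
  by case: x => //= _ ->; rewrite ?orbT.
case/andP=> /andP [/andP [/andP [oN oE] oS] oW].
have hN : hitS (reachS f tN) by apply: hit oN; rewrite !inE eqxx.
have hE : hitS (reachS f tE) by apply: hit oE; rewrite !inE eqxx ?orbT.
have hS : hitS (reachS f tS) by apply: hit oS; rewrite !inE eqxx ?orbT.
have hW : hitS (reachS f tW) by apply: hit oW; rewrite !inE eqxx ?orbT.
rewrite hN hE hS hW => /orP [] // /andP [/Nat.leb_le /leP le6 rest].
rewrite card_cnt; split; first exact: le6.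
move=> c6; move: rest; rewrite c6 => /orP [/orP []|] //.
  by move=> /patA; left.
by move=> /patB; right.
Qed.

End Main.

Theorem lemma6p4 (H : {set cg_edge}) :
  (forall t, t \in terminals -> exists2 x, interface x & connH H t x) ->
  6 <= #|H| /\
  (#|H| = 6 ->
     H = incident uNW :|: incident uSE \/ H = incident uNE :|: incident uSW).
Proof. exact: main. Qed.
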